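(* For $n\ge 1$, let $\operatorname{NE}_n(k)$ denote the number of permutations $\sigma\in\mathfrak{S}_n$ with nesting number $\operatorname{Ne}(\sigma)=k$. Then \[\operatorname{NE}_n(\lceil n/2\rceil)=\begin{cases} m! & \text{if } n=2m+1,\\ 2(m+1)!-(m-1)!-1 & \text{if } n=2m.\end{cases}\]
   Context: For $\sigma\in\mathfrak{S}_n$, the arcs of $\sigma$ are the pairs $(a,\sigma(a))$, $1\le a\le n$. A $k$-nesting of $\sigma$ is a set of $k$ arcs $\{(a_i,\sigma(a_i)):1\le i\le k\}$ satisfying either $a_1<a_2<\dots<a_k\le\sigma(a_k)<\dots<\sigma(a_2)<\sigma(a_1)$ (upper $k$-nesting; loops $a=\sigma(a)$ are allowed) or $\sigma(a_1)<\sigma(a_2)<\dots<\sigma(a_k)<a_k<\dots<a_2<a_1$ (lower $k$-nesting). The nesting number $\operatorname{Ne}(\sigma)$ is the largest $k$ such that $\sigma$ has a $k$-nesting. *)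

(* Defs.v *)
(* Positions 1..n are represented 0-indexed by 'I_n. *)
From mathcomp Require Import all_boot all_order all_fingroup.
Set Implicit Arguments. Unset Strict Implicit. Unset Printing Implicit Defensive.

(* upper k-nesting: a_1 < ... < a_k <= s(a_k) < ... < s(a_1); the tuple t lists a_1..a_k *)
Definition upper_nesting n (s : 'S_n) k (t : k.-tuple 'I_n) : bool :=
  [&& sorted (fun x y : 'I_n => (x < y)%N) t,
      sorted (fun x y : 'I_n => (y < x)%N) (map s t) &
      (if val t is x :: _ then (last x t <= s (last x t))%N else true)].

(* lower k-nesting: s(a_1) < ... < s(a_k) < a_k < ... < a_1; t lists a_1..a_k *)
Definition lower_nesting n (s : 'S_n) k (t : k.-tuple 'I_n) : bool :=
  [&& sorted (fun x y : 'I_n => (y < x)%N) t,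
      sorted (fun x y : 'I_n => (x < y)%N) (map s t) &
      (if val t is x :: _ then (s (last x t) < last x t)%N else true)].

Definition has_nesting n (s : 'S_n) k : bool :=
  [exists t : k.-tuple 'I_n, upper_nesting s t || lower_nesting s t].

(* nesting number: the largest k with a k-nesting (any nesting has k <= n) *)
Definition Ne n (s : 'S_n) : nat := \max_(k < n.+1 | has_nesting s k) k.

Definition NE n k : nat := #|[set s : 'S_n | Ne s == k]|.

(* Main.v *)
Require Import Defs.
From mathcomp Require Import all_boot all_order all_fingroup zify.
Set Implicit Arguments. Unset Strict Implicit. Unset Printing Implicit Defensive.

Lemma card_predX n (X : pred nat) : #|[set x : 'I_n | X x]| = count X (iota 0 n).
Proof.
rewrite cardE size_filter -enumT.
by rewrite -val_enum_ord count_map; apply: eq_count => x; rewrite /= inE.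
Qed.

Lemma ext_perm n (l : seq 'I_n) (f : 'I_n -> 'I_n) :
  {in l &, injective f} -> exists g : 'S_n, {in l, g =1 f}.
Proof.
elim: l => [|x l IH] inj; first by exists 1%g.
have [|g Hg] := IH; first by move=> y z Hy Hz; apply: inj; rewrite inE ?Hy ?Hz orbT.
exists (g * tperm (g x) (f x))%g => y; rewrite inE => /orP [/eqP->|Hy].
  by rewrite permM tpermL.
case: (eqVneq y x) => [->|nyx]; first by rewrite permM tpermL.
rewrite permM (Hg y Hy) tpermD //.
  by rewrite -(Hg y Hy) (inj_eq (@perm_inj _ g)) eq_sym.
apply/negP => /eqP E; move: nyx; rewrite (inj _ _ _ _ (esym E)) ?eqxx //; last first.
  by rewrite mem_head.
by rewrite in_cons Hy orbT.
Qed.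

Lemma card_fix n (g : 'S_n) (X : {set 'I_n}) :
  #|[set s : 'S_n | [forall x in X, s x == g x]]| = #|~: X|`!.
Proof.
rewrite -card_perm -(card_imset (perm_on (~: X)) (mulIg g)).
apply: eq_card => s; rewrite inE; apply/forall_inP/imsetP.
- move=> H; exists (s * g^-1)%g; last by rewrite -mulgA mulVg mulg1.
  apply/subsetP => x; rewrite !inE; apply: contraNN => Xx.
  by rewrite permM (eqP (H x Xx)) permK.
- move=> [p Hp ->] x Xx; rewrite permM (out_perm Hp) //.
  by rewrite inE negbK.
Qed.

Definition fixset n (X : pred nat) (F : nat -> nat) : {set 'S_n} :=
  [set s : 'S_n | [forall x : 'I_n, X x ==> (val (s x) == F x)]].

Lemma card_fixset n (X : pred nat) (F : nat -> nat) :
  (forall x, x < n -> X x -> F x < n) ->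
  (forall x y, x < n -> y < n -> X x -> X y -> F x = F y -> x = y) ->
  #|fixset n X F| = (n - count X (iota 0 n))`!.
Proof.
move=> Fr Fi.
set Xs := [set x : 'I_n | X x].
pose f (x : 'I_n) : 'I_n := insubd x (F x).
have vf (x : 'I_n) : X x -> val (f x) = F x by move=> Xx; rewrite val_insubd Fr.
have [|g Hg] := @ext_perm n (enum Xs) f.
  move=> x y; rewrite !mem_enum !inE => Xx Xy E; apply: val_inj.
  by apply: (Fi _ _ (ltn_ord x) (ltn_ord y) Xx Xy); rewrite -(vf x Xx) -(vf y Xy) E.
rewrite -card_predX -/Xs.
have -> : n - #|Xs| = #|~: Xs| by rewrite -[n in n - _]card_ord -(cardsC Xs) addKn.
rewrite -(card_fix g).
apply: eq_card => s; rewrite !inE; apply/forallP/forall_inP.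
- move=> H x; rewrite inE => Xx; have := H x; rewrite Xx /= => /eqP E.
  apply/eqP/val_inj. rewrite (Hg x) ?mem_enum ?inE // vf // -E.
- move=> H x; apply/implyP => Xx.
  by rewrite (eqP (H x _)) ?inE // (Hg x) ?mem_enum ?inE // vf.
Qed.
Lemma gap_inc (a : nat -> nat) k : (forall i j, i < j < k -> a i < a j) ->
  forall i j, i <= j < k -> a i + (j - i) <= a j.
Proof.
move=> H i j; elim: j => [|j IH].
  by rewrite leqn0 => /andP [/eqP -> _]; rewrite addn0.
move=> /andP [hij hjk].
case: (ltngtP i j.+1) hij => // [hlt|->] _; last by rewrite subnn addn0.
have := IH; rewrite -ltnS hlt /= => /(_ (ltnW hjk)).
have := H j j.+1; rewrite ltnSn hjk /= => /(_ isT). lia.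
Qed.

Lemma gap_dec (a : nat -> nat) k : (forall i j, i < j < k -> a j < a i) ->
  forall i j, i <= j < k -> a j + (j - i) <= a i.
Proof.
move=> H i j; elim: j => [|j IH].
  by rewrite leqn0 => /andP [/eqP -> _]; rewrite addn0.
move=> /andP [hij hjk].
case: (ltngtP i j.+1) hij => // [hlt|->] _; last by rewrite subnn addn0.
have := IH; rewrite -ltnS hlt /= => /(_ (ltnW hjk)).
have := H j j.+1; rewrite ltnSn hjk /= => /(_ isT). lia.
Qed.

Lemma last_nth_tuple n k (t : k.-tuple 'I_n) x l (x0 : 'I_n) :
  val t = x :: l -> last x t = nth x0 t k.-1.
Proof.
case: t => v hv /= Et; subst v; rewrite -(eqP hv) /= (set_nth_default x) //.
exact: (esym (nth_last x (x :: l))).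
Qed.

Lemma upper_facts n (s : 'S_n) k (t : k.-tuple 'I_n) (x0 : 'I_n) :
  upper_nesting s t -> 0 < k ->
  (forall i j, i <= j < k -> nat_of_ord (nth x0 t i) + (j - i) <= nat_of_ord (nth x0 t j) /\
       nat_of_ord (s (nth x0 t j)) + (j - i) <= nat_of_ord (s (nth x0 t i))) /\
  nat_of_ord (nth x0 t k.-1) <= nat_of_ord (s (nth x0 t k.-1)).
Proof.
move=> /and3P [H1 H2 H3] k0.
have tr1 : transitive (fun x y : 'I_n => x < y) by move=> y x z h1 h2; exact: ltn_trans h1 h2.
have tr2 : transitive (fun x y : 'I_n => y < x) by move=> y x z h1 h2; exact: ltn_trans h2 h1.
split.
- move=> i j hij; split.
  + apply: (@gap_inc (fun i => val (nth x0 t i)) k) => // {hij} i' j' /andP [h1 h2].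
    by apply: (sorted_ltn_nth tr1 x0 H1); rewrite ?inE ?size_tuple // (ltn_trans h1).
  + apply: (@gap_dec (fun i => val (s (nth x0 t i))) k) => // {hij} i' j' /andP [h1 h2].
    have hi : i' < size t by rewrite size_tuple (ltn_trans h1).
    have hj : j' < size t by rewrite size_tuple.
    rewrite -!(nth_map x0 (s x0)) //.
    apply: (sorted_ltn_nth tr2 (s x0) H2);
      by rewrite ?inE ?size_map.
- case Et: (val t) H3 => [|x l] H3.
    by move: (size_tuple t); rewrite Et => E; move: k0; rewrite -E.
  by rewrite -(last_nth_tuple x0 Et).
Qed.

Lemma lower_facts n (s : 'S_n) k (t : k.-tuple 'I_n) (x0 : 'I_n) :
  lower_nesting s t -> 0 < k ->
  (forall i j, i <= j < k -> nat_of_ord (nth x0 t j) + (j - i) <= nat_of_ord (nth x0 t i) /\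
       nat_of_ord (s (nth x0 t i)) + (j - i) <= nat_of_ord (s (nth x0 t j))) /\
  nat_of_ord (s (nth x0 t k.-1)) < nat_of_ord (nth x0 t k.-1).
Proof.
move=> /and3P [H1 H2 H3] k0.
have tr1 : transitive (fun x y : 'I_n => x < y) by move=> y x z h1 h2; exact: ltn_trans h1 h2.
have tr2 : transitive (fun x y : 'I_n => y < x) by move=> y x z h1 h2; exact: ltn_trans h2 h1.
split.
- move=> i j hij; split.
  + apply: (@gap_dec (fun i => val (nth x0 t i)) k) => // {hij} i' j' /andP [h1 h2].
    by apply: (sorted_ltn_nth tr2 x0 H1); rewrite ?inE ?size_tuple // (ltn_trans h1).
  + apply: (@gap_inc (fun i => val (s (nth x0 t i))) k) => // {hij} i' j' /andP [h1 h2].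
    have hi : i' < size t by rewrite size_tuple (ltn_trans h1).
    have hj : j' < size t by rewrite size_tuple.
    rewrite -!(nth_map x0 (s x0)) //.
    apply: (sorted_ltn_nth tr1 (s x0) H2);
      by rewrite ?inE ?size_map.
- case Et: (val t) H3 => [|x l] H3.
    by move: (size_tuple t); rewrite Et => E; move: k0; rewrite -E.
  by rewrite -(last_nth_tuple x0 Et).
Qed.
Lemma sorted_iota_rel (r : rel nat) k : forall i,
  (forall j, i <= j -> j.+1 < i + k -> r j j.+1) -> sorted r (iota i k).
Proof.
elim: k => [//|[|k] IH] i H //=.
rewrite (H i (leqnn i)) /=; last by lia.
have := IH i.+1; rewrite /= => -> // j hj hjk; apply: H; lia.
Qed.

Lemma last_iota k : forall i, last i (iota i.+1 k) = i + k.
Proof. elim: k => [|k IH] i /=; first by rewrite addn0. by rewrite IH addnS. Qed.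

Lemma mk_upper n (s : 'S_n) k (a b : nat -> nat) : 0 < n -> 0 < k ->
  (forall i, i < k -> a i < n) ->
  (forall i, i.+1 < k -> a i < a i.+1) ->
  (forall i (x : 'I_n), i < k -> val x = a i -> val (s x) = b i) ->
  (forall i, i.+1 < k -> b i.+1 < b i) -> a k.-1 <= b k.-1 -> has_nesting s k.
Proof.
move=> n0 k0 ha hinc hs hdec hlast.
pose x0 : 'I_n := Ordinal n0.
pose g i : 'I_n := insubd x0 (a i).
have vg i : i < k -> val (g i) = a i by move=> hi; rewrite val_insubd ha.
have vsg i : i < k -> val (s (g i)) = b i by move=> hi; apply: hs; rewrite ?vg.
have hsz : size (map g (iota 0 k)) == k by rewrite size_map size_iota.
apply/existsP; exists (Tuple hsz); apply/orP; left; apply/and3P; split => /=.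
- rewrite sorted_map; apply: sorted_iota_rel => j _ hj /=.
  by rewrite !vg ?hinc // ltnW.
- rewrite -map_comp sorted_map; apply: sorted_iota_rel => j _ hj /=.
  by rewrite !vsg ?hdec // ltnW.
- case: k k0 {ha hinc hs hdec hlast vg vsg hsz} (vg) (vsg) hlast => // k _ vg' vsg' hl /=.
  by rewrite last_map last_iota add0n vg' ?vsg'.
Qed.

Lemma mk_lower n (s : 'S_n) k (a b : nat -> nat) : 0 < n -> 0 < k ->
  (forall i, i < k -> a i < n) ->
  (forall i, i.+1 < k -> a i.+1 < a i) ->
  (forall i (x : 'I_n), i < k -> val x = a i -> val (s x) = b i) ->
  (forall i, i.+1 < k -> b i < b i.+1) -> b k.-1 < a k.-1 -> has_nesting s k.
Proof.
move=> n0 k0 ha hinc hs hdec hlast.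
pose x0 : 'I_n := Ordinal n0.
pose g i : 'I_n := insubd x0 (a i).
have vg i : i < k -> val (g i) = a i by move=> hi; rewrite val_insubd ha.
have vsg i : i < k -> val (s (g i)) = b i by move=> hi; apply: hs; rewrite ?vg.
have hsz : size (map g (iota 0 k)) == k by rewrite size_map size_iota.
apply/existsP; exists (Tuple hsz); apply/orP; right; apply/and3P; split => /=.
- rewrite sorted_map; apply: sorted_iota_rel => j _ hj /=.
  by rewrite !vg ?hinc // ltnW.
- rewrite -map_comp sorted_map; apply: sorted_iota_rel => j _ hj /=.
  by rewrite !vsg ?hdec // ltnW.
- case: k k0 {ha hinc hs hdec hlast vg vsg hsz} (vg) (vsg) hlast => // k _ vg' vsg' hl /=.
  by rewrite last_map last_iota add0n vg' ?vsg'.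
Qed.

Lemma upper_abs n (s : 'S_n) k (t : k.-tuple 'I_n) :
  upper_nesting s t -> 0 < k -> exists a b : nat -> nat,
  [/\ forall i, i < k -> a i < n, forall i, i < k -> b i < n,
   forall i j, i <= j < k -> a i + (j - i) <= a j /\ b j + (j - i) <= b i,
   a k.-1 <= b k.-1 &
   forall i (x : 'I_n), i < k -> nat_of_ord x = a i -> nat_of_ord (s x) = b i].
Proof.
move=> H k0; pose x0 := tnth t (Ordinal k0).
have [F L] := upper_facts x0 H k0.
exists (fun i => nat_of_ord (nth x0 t i)), (fun i => nat_of_ord (s (nth x0 t i))); split => //.
move=> i x hi hx; congr (nat_of_ord (s _)); exact: val_inj.
Qed.

Lemma lower_abs n (s : 'S_n) k (t : k.-tuple 'I_n) :
  lower_nesting s t -> 0 < k -> exists a b : nat -> nat,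
  [/\ forall i, i < k -> a i < n, forall i, i < k -> b i < n,
   forall i j, i <= j < k -> a j + (j - i) <= a i /\ b i + (j - i) <= b j,
   b k.-1 < a k.-1 &
   forall i (x : 'I_n), i < k -> nat_of_ord x = a i -> nat_of_ord (s x) = b i].
Proof.
move=> H k0; pose x0 := tnth t (Ordinal k0).
have [F L] := lower_facts x0 H k0.
exists (fun i => nat_of_ord (nth x0 t i)), (fun i => nat_of_ord (s (nth x0 t i))); split => //.
move=> i x hi hx; congr (nat_of_ord (s _)); exact: val_inj.
Qed.

Lemma step01 (d : nat -> nat) k : (forall i, i < k -> d i <= 1) ->
  (forall i, i.+1 < k -> d i <= d i.+1) ->
  exists2 p, p <= k & forall i, i < k -> d i = (p <= i).
Proof.
elim: k => [|k IH] h1 h2; first by exists 0.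
have [||p hp Hp] := IH.
- by move=> i hi; apply: h1; lia.
- by move=> i hi; apply: h2; lia.
have [hpk|hpk] := ltnP p k.
- exists p => [|i hi]; first by lia.
  have [hik|hik] := ltnP i k; first exact: Hp.
  have -> : i = k by lia.
  have hp1 : p <= k.-1 by lia.
  have e1 : d k.-1 = 1 by rewrite Hp ?hp1 //; lia.
  have e2 := h2 k.-1; rewrite prednK in e2; last by lia.
  have e3 := h1 k (ltnSn k).
  rewrite (ltnW hpk); have := e2 (ltnSn k); lia.
- have ep : p = k by lia.
  subst p.
  have e3 := h1 k (ltnSn k).
  have [e|e] : d k = 0 \/ d k = 1 by lia.
  + exists k.+1 => // i hi; have [hik|hik] := ltnP i k.
      rewrite Hp //; congr nat_of_bool; apply/idP/idP; lia.
    have -> : i = k by lia.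
    by rewrite e ltnn.
  + exists k => // i hi; have [hik|hik] := ltnP i k.
      by rewrite Hp // leqNgt hik.
    have -> : i = k by lia.
    by rewrite e.
Qed.

Lemma has_nesting0 n (s : 'S_n) : has_nesting s 0.
Proof. by apply/existsP; exists [tuple]; rewrite /upper_nesting. Qed.

Lemma nest_bound n (s : 'S_n) k : has_nesting s k -> k <= uphalf n.
Proof.
have hu := uphalf_half n; have ho := odd_double_half n.
move: (n./2) hu ho => h; rewrite -addnn => hu ho.
case: k => [//|k] /existsP [t /orP [H|H]].
- have [a [b [ha hb F L _]]] := upper_abs H (ltn0Sn k).
  have [F1 F2] := F 0 k (ltnSn k); have := hb 0 (ltn0Sn k); simpl in L.
  move: hu ho; case: (odd n) => /=; lia.
- have [a [b [ha hb F L _]]] := lower_abs H (ltn0Sn k).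
  have [F1 F2] := F 0 k (ltnSn k); have := ha 0 (ltn0Sn k); simpl in L.
  move: hu ho; case: (odd n) => /=; lia.
Qed.

Lemma Ne_max n (s : 'S_n) : 0 < n -> (Ne s == uphalf n) = has_nesting s (uphalf n).
Proof.
move=> n0; have hu : uphalf n < n.+1.
  by have := uphalf_half n; have := odd_double_half n; move: (n./2) => h; case: (odd n) => /=; lia.
apply/eqP/idP.
- have [|i0 Hi0 E] := @eq_bigmax_cond _ (fun k : 'I_n.+1 => has_nesting s k) (fun k => val k).
    by apply/card_gt0P; exists ord0; rewrite /in_mem /= has_nesting0.
  by rewrite /Ne E => <-.
- move=> H; apply/eqP; rewrite eqn_leq; apply/andP; split.
  + by apply/bigmax_leqP => i; apply: nest_bound.
  + exact: (@leq_bigmax_cond _ (fun k : 'I_n.+1 => has_nesting s k) (fun k => val k) (Ordinal hu)).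
Qed.

Lemma count_lt k n : count (fun x => x < k) (iota 0 n) = minn k n.
Proof.
elim: n => [|n IH]; first by rewrite minn0.
rewrite -addn1 iotaD count_cat IH /= add0n addn0.
case: ltnP => h; lia.
Qed.

Lemma count_split (a b : pred nat) s :
  count a s = count (predI b a) s + count (predI (predC b) a) s.
Proof. by rewrite -!count_filter count_predC size_filter. Qed.

Lemma count_ge k n : k <= n -> count (fun x => k <= x) (iota 0 n) = n - k.
Proof.
move=> hk; rewrite (count_split _ (fun x => x < k)).
have -> : count (predI (fun x => x < k) (fun x => k <= x)) (iota 0 n) = 0.
  by apply/eqP; rewrite -leqn0 leqNgt -has_count; apply/hasP => -[x _ /= /andP []]; lia.
have -> : count (predI (predC (fun x => x < k)) (fun x => k <= x)) (iota 0 n) =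
          count (predC (fun x => x < k)) (iota 0 n).
  by apply: eq_count => x /=; rewrite -leqNgt andbb.
have := count_predC (fun x => x < k) (iota 0 n); rewrite count_lt size_iota; lia.
Qed.

Lemma card_has_union (T : finType) (F : nat -> {set T}) k c :
  (forall p, p < k -> #|F p| = c) ->
  (forall p q x, p < q -> q < k -> x \in F p -> x \in F q -> False) ->
  #|[set x | has (fun p => x \in F p) (iota 0 k)]| = k * c.
Proof.
elim: k => [|k IH] Hc Hd.
  by rewrite mul0n; apply/eqP; rewrite cards_eq0; apply/eqP/setP => x; rewrite !inE.
have -> : [set x | has (fun p => x \in F p) (iota 0 k.+1)] =
          [set x | has (fun p => x \in F p) (iota 0 k)] :|: F k.
  by apply/setP => x; rewrite !inE -addn1 iotaD has_cat /= orbF.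
rewrite cardsU IH; last by move=> p q x hp hq; apply: Hd => //; lia.
  2: by move=> p hp; apply: Hc; lia.
have -> : [set x | has (fun p => x \in F p) (iota 0 k)] :&: F k = set0.
  apply/setP => x; rewrite !inE; apply/negbTE/negP => /andP [/hasP [p hp hx] hk].
  by apply: (Hd p k x) => //; move: hp; rewrite mem_iota.
by rewrite cards0 subn0 Hc // mulSn addnC.
Qed.

Lemma two_le i j k : i <= j -> j < k -> i <= j < k.
Proof. by move=> -> ->. Qed.

Lemma odd_char m (s : 'S_(m.*2.+1)) :
  has_nesting s m.+1 = (s \in fixset m.*2.+1 (fun x => x <= m) (fun x => m.*2 - x)).
Proof.
apply/idP/idP.
- move/existsP => [t /orP [H|H]].
  + have [a [b [ha hb F L hs]]] := upper_abs H (ltn0Sn m); simpl in L.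
    have key i : i <= m -> a i = i /\ b i = m.*2 - i.
      move=> hi; have [F1 F2] := F 0 i (two_le (leq0n i) (hi : i < m.+1)); have [G1 G2] := F i m (two_le hi (ltnSn m)).
      have [H1 H2] := F 0 m (two_le (leq0n m) (ltnSn m)); have := hb 0 (ltn0Sn _); lia.
    rewrite inE; apply/forallP => x; apply/implyP => hx; apply/eqP.
    have [k1 k2] := key x hx.
    exact: (eq_trans (hs x x hx (esym k1)) k2).
  + have [a [b [ha hb F L hs]]] := lower_abs H (ltn0Sn m); simpl in L.
    have [F1 F2] := F 0 m (two_le (leq0n m) (ltnSn m)); have := ha 0 (ltn0Sn _); lia.
- rewrite inE => /forallP H.
  apply: (@mk_upper _ s m.+1 (fun i => i) (fun i => m.*2 - i)) => //.
  + by move=> i hi; lia.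
  + move=> i x hi hx; have := H x; rewrite hx -ltnS hi => /eqP ->; done.
  + by move=> i hi; lia.
  + by simpl; lia.
Qed.

Lemma NE_has n : 0 < n -> NE n (uphalf n) = #|[set s : 'S_n | has_nesting s (uphalf n)]|.
Proof. by move=> n0; apply: eq_card => s; rewrite !inE Ne_max. Qed.

Lemma odd_case m : NE m.*2.+1 (uphalf m.*2.+1) = m`!.
Proof.
rewrite NE_has //.
have -> : uphalf m.*2.+1 = m.+1 by rewrite uphalfE -doubleS doubleK.
rewrite (eq_card (B := fixset m.*2.+1 (fun x => x <= m) (fun x => m.*2 - x))).
- rewrite card_fixset.
  + rewrite (eq_count (a2 := fun x => x < m.+1)) // count_lt; congr (_`!); lia.
  + by move=> x hx hxm; lia.
  + by move=> x y _ _ hx hy; lia.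
- by move=> s; rewrite [in LHS]inE odd_char.
Qed.

Lemma fixsetP n (X : pred nat) F (s : 'S_n) :
  reflect (forall x : 'I_n, X x -> nat_of_ord (s x) = F (nat_of_ord x)) (s \in fixset n X F).
Proof.
rewrite inE; apply: (iffP forallP) => H x.
- by move=> Xx; have := H x; rewrite Xx => /eqP.
- by apply/implyP => Xx; apply/eqP; exact: H.
Qed.

Definition Lset m : {set 'S_(m.*2)} := fixset (m.*2) (fun x => m <= x) (fun x => m.*2 - 1 - x).
Definition Aset m p : {set 'S_(m.*2)} :=
  fixset (m.*2) (fun x => x < m) (fun x => if x < p then m.*2 - 1 - x else m.*2 - 2 - x).
Definition Bset m j : {set 'S_(m.*2)} :=
  fixset (m.*2) (fun x => (x <= m) && (x != j)) (fun x => if x < j then m.*2 - 1 - x else m.*2 - x).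
Definition Iset m : {set 'S_(m.*2)} :=
  fixset (m.*2) (fun x => x <= m) (fun x => if x < m - 1 then m.*2 - 1 - x else x).
Definition AU m : {set 'S_(m.*2)} := [set s | has (fun p => s \in Aset m p) (iota 0 m.+1)].
Definition BU m : {set 'S_(m.*2)} := [set s | has (fun j => s \in Bset m j) (iota 0 m)].

Lemma even_char m (s : 'S_(m.*2)) : 0 < m ->
  has_nesting s m = (s \in (AU m :|: BU m) :|: Lset m).
Proof.
move=> m0; have hm1 : m - 1 < m by lia.
apply/idP/idP.
- move/existsP => [t /orP [H|H]].
  + have [a [b [ha hb F L hs]]] := upper_abs H m0.
    have {}L : a (m - 1) <= b (m - 1) by rewrite subn1.
    have F' i j : i <= j -> j < m -> a i + (j - i) <= a j /\ b j + (j - i) <= b i.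
      by move=> h1 h2; apply: F; rewrite h1 h2.
    have hb0 := hb 0 m0.
    have K i : i < m -> [/\ i <= a i, a i + (m - 1 - i) <= a (m - 1),
                           b (m - 1) + (m - 1 - i) <= b i & b i + i <= b 0].
      move=> hi; have [F1 F2] := F' 0 i (leq0n i) hi.
      have hi' : i <= m - 1 by lia.
      have [G1 G2] := F' i (m - 1) hi' hm1; split; lia.
    have [E|E] : a (m - 1) = m - 1 \/ a (m - 1) = m.
      have [k1 k2 k3 k4] := K (m - 1) hm1; lia.
    * have [||p hp Hp] := @step01 (fun i => (m.*2 - 1 - i) - b i) m.
      -- by move=> i hi; have [k1 k2 k3 k4] := K i hi; lia.
      -- move=> i hi; have [F1 F2] := F' i i.+1 (leqnSn i) hi.
         have hi' : i < m by lia.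
         have [k1 k2 k3 k4] := K i hi'; lia.
      rewrite !in_setU; apply/orP; left; apply/orP; left.
      rewrite inE; apply/hasP; exists p; first by rewrite mem_iota; lia.
      apply/fixsetP => x hx; have [k1 k2 k3 k4] := K x hx.
      have ax : a x = x by lia.
      rewrite (hs x x hx (esym ax)) /=.
      by move: (Hp x hx); case: ltnP => _ /=; lia.
    * have bi i : i < m -> b i = m.*2 - 1 - i.
        by move=> hi; have [k1 k2 k3 k4] := K i hi; lia.
      have [||p hp Hp] := @step01 (fun i => a i - i) m.
      -- by move=> i hi; have [k1 k2 k3 k4] := K i hi; lia.
      -- by move=> i hi; have [F1 F2] := F' i i.+1 (leqnSn i) hi; lia.
      have pm : p < m.
        by move: (Hp (m - 1) hm1); case: (leqP p (m - 1)) => hq /=; lia.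
      rewrite !in_setU; apply/orP; left; apply/orP; right.
      rewrite inE; apply/hasP; exists p; first by rewrite mem_iota; lia.
      apply/fixsetP => x /andP [hxm hxp] /=.
      case: (ltnP x p) => hxp'.
      -- have hxm' : x < m by lia.
         have [k1 k2 k3 k4] := K x hxm'.
         have ax : a x = x by move: (Hp x hxm'); rewrite leqNgt hxp' /=; lia.
         by rewrite (hs x x hxm' (esym ax)) bi.
      -- have hi : x - 1 < m by lia.
         have ax : a (x - 1) = x.
           have hq : p <= x - 1 by lia.
           by move: (Hp (x - 1) hi); rewrite hq /=; lia.
         by rewrite (hs (x - 1) x hi (esym ax)) bi //; lia.
  + have [a [b [ha hb F L hs]]] := lower_abs H m0.
    have {}L : b (m - 1) < a (m - 1) by rewrite subn1.
    have F' i j : i <= j -> j < m -> a j + (j - i) <= a i /\ b i + (j - i) <= b j.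
      by move=> h1 h2; apply: F; rewrite h1 h2.
    have ha0 := ha 0 m0.
    have [H1 H2] := F' 0 (m - 1) (leq0n _) hm1.
    have K i : i < m -> a i = m.*2 - 1 - i /\ b i = i.
      move=> hi; have [F1 F2] := F' 0 i (leq0n i) hi.
      have hi' : i <= m - 1 by lia.
      have [G1 G2] := F' i (m - 1) hi' hm1; lia.
    rewrite !in_setU; apply/orP; right.
    apply/fixsetP => x hx /=.
    have hi : m.*2 - 1 - x < m by have := ltn_ord x; lia.
    have [k1 k2] := K _ hi.
    rewrite (hs _ x hi) ?k2 //; have := ltn_ord x; lia.
- rewrite !in_setU => /orP [/orP [HA|HB]|HL].
  + move: HA; rewrite inE => /hasP [p hp /fixsetP HA].
    apply: (@mk_upper _ s m (fun i => i)
      (fun i => if i < p then m.*2 - 1 - i else m.*2 - 2 - i)) => //.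
    * by lia.
    * by move=> i hi; lia.
    * by move=> i x hi hx; apply: (eq_trans (HA x _)); rewrite /= hx.
    * by move=> i hi; case: (ltnP i.+1 p); case: (ltnP i p); lia.
    * by case: ltnP; lia.
  + move: HB; rewrite inE => /hasP [j hj /fixsetP HB].
    move: hj; rewrite mem_iota => /andP [_ hj].
    apply: (@mk_upper _ s m (fun i => if i < j then i else i.+1)
      (fun i => m.*2 - 1 - i)) => //.
    * by lia.
    * by move=> i hi; case: (ltnP i j); lia.
    * by move=> i hi; case: (ltnP i.+1 j); case: (ltnP i j); lia.
    * move=> i x hi hx; apply: (eq_trans (HB x _)); rewrite /= hx.
        by case: (ltnP i j) => h /=; apply/andP; split; lia.
      by case: (ltnP i j) => h1 /=; case: ltnP => h2; lia.
    * by move=> i hi; lia.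
    * by case: ltnP; lia.
  + move/fixsetP: HL => HL.
    apply: (@mk_lower _ s m (fun i => m.*2 - 1 - i) (fun i => i)) => //.
    * by lia.
    * by move=> i hi; lia.
    * by move=> i hi; lia.
    * move=> i x hi hx; apply: (eq_trans (HL x _)); rewrite /= hx; lia.
    * by lia.
Qed.

Lemma ord_of m k : k < m.*2 -> 'I_(m.*2).
Proof. exact: Ordinal. Defined.

Lemma perm_val_inj n (s : 'S_n) (x y : 'I_n) :
  nat_of_ord (s x) = nat_of_ord (s y) -> nat_of_ord x = nat_of_ord y.
Proof. by move=> E; congr nat_of_ord; apply: (@perm_inj _ s); apply: val_inj. Qed.

Lemma AB_int m : 0 < m -> AU m :&: BU m = Iset m.
Proof.
move=> m0; apply/setP => s; rewrite in_setI /AU /BU [X in X && _]inE [X in _ && X]inE /Iset.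
have h1 : m - 1 < m.*2 by lia.
have hm : m < m.*2 by lia.
pose x1 : 'I_(m.*2) := Ordinal h1.
pose xm : 'I_(m.*2) := Ordinal hm.
apply/andP/fixsetP.
- move=> [/hasP [p hp /fixsetP HA] /hasP [j hj /fixsetP HB]].
  move: hj; rewrite mem_iota => /andP [_ hj].
  have sm : nat_of_ord (s xm) = m.
    by rewrite (HB xm) /=; [rewrite ltnNge (ltnW hj) /=; lia | apply/andP; split; lia].
  have s1 : nat_of_ord (s x1) = m - 1.
    have := HA x1 ltac:(rewrite /=; lia); rewrite /=.
    case: ltnP => hq E; last by lia.
    have := @perm_val_inj _ s x1 xm; rewrite E sm /=; lia.
  have jm : j = m - 1.
    case: (eqVneq j (m - 1)) => // hne.
    have := HB x1; rewrite /= s1; case: ltnP => hq E; have := E ltac:(apply/andP; split; lia); lia.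
  move=> x hx /=; case: (ltnP x (m - 1)) => hx1.
  + by rewrite (HB x) /= ?jm ?hx1 //; apply/andP; split; lia.
  + have [e|e] : nat_of_ord x = m - 1 \/ nat_of_ord x = m by lia.
    * by rewrite e; apply: (eq_trans _ s1); congr (nat_of_ord (s _)); apply: val_inj.
    * by rewrite e; apply: (eq_trans _ sm); congr (nat_of_ord (s _)); apply: val_inj.
- move=> HI; split.
  + apply/hasP; exists (m - 1); first by rewrite mem_iota; lia.
    apply/fixsetP => x hx /=; rewrite (HI x) /=; last by lia.
    by case: ltnP => h; lia.
  + apply/hasP; exists (m - 1); first by rewrite mem_iota; lia.
    apply/fixsetP => x /andP [hx hx'] /=; rewrite (HI x) //=.
    by case: ltnP => h; lia.
Qed.

Definition rv m : 'S_(m.*2) := perm (@rev_ord_inj (m.*2)).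

Lemma ABL_int m : 0 < m -> (AU m :|: BU m) :&: Lset m = [set rv m].
Proof.
move=> m0; apply/setP => s; rewrite in_setI in_setU /AU /BU [X in (X || _) && _]inE
  [X in (_ || X) && _]inE in_set1.
have h1 : m - 1 < m.*2 by lia.
have hm : m < m.*2 by lia.
pose x1 : 'I_(m.*2) := Ordinal h1.
pose xm : 'I_(m.*2) := Ordinal hm.
apply/andP/eqP.
- move=> [/orP [/hasP [p hp /fixsetP HA]|/hasP [j hj /fixsetP HB]] /fixsetP HL].
  + have sm : nat_of_ord (s xm) = m - 1 by rewrite (HL xm) /=; lia.
    have pm : m <= p.
      rewrite leqNgt; apply/negP => hp'.
      have := HA x1 ltac:(rewrite /=; lia); rewrite /= ltnNge (_ : p <= m - 1) /=; last by lia.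
      move=> E; have := @perm_val_inj _ s x1 xm; rewrite E sm /=; lia.
    apply/permP => x; apply: val_inj; rewrite permE /=.
    case: (ltnP x m) => hx.
    * by rewrite (HA x hx) /= (leq_trans hx pm); lia.
    * by rewrite (HL x hx); lia.
  + move: hj; rewrite mem_iota => /andP [_ hj].
    have := HL xm (leqnn _); rewrite (HB xm) /=; last by apply/andP; split; lia.
    by rewrite ltnNge (ltnW hj) /=; lia.
- move=> ->; split.
  + apply/orP; left; apply/hasP; exists m; first by rewrite mem_iota; lia.
    by apply/fixsetP => x hx /=; rewrite permE /= hx; lia.
  + by apply/fixsetP => x hx /=; rewrite permE /=; lia.
Qed.

Lemma count_ne m j : j <= m -> m < m.*2 ->
  count (fun x => (x <= m) && (x != j)) (iota 0 m.*2) = m.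
Proof.
move=> hj hm.
have E := count_split (fun x => x <= m) (pred1 j) (iota 0 m.*2).
have E1 : count (predI (pred1 j) (fun x => x <= m)) (iota 0 m.*2) = 1.
  rewrite (eq_count (a2 := pred1 j)); last first.
    by move=> x /=; case: eqP => // ->; rewrite hj.
  by rewrite count_uniq_mem ?iota_uniq // mem_iota /=; lia.
have E2 : count (fun x => x <= m) (iota 0 m.*2) = m.+1.
  by rewrite (eq_count (a2 := fun x => x < m.+1)) // count_lt; lia.
have E3 : count (predI (predC (pred1 j)) (fun x => x <= m)) (iota 0 m.*2) =
          count (fun x => (x <= m) && (x != j)) (iota 0 m.*2).
  by apply: eq_count => x /=; rewrite andbC.
move: E; rewrite E1 E2 add1n => -[] E; rewrite -E3; exact: esym E.
Qed.

Lemma card_Aset m p : 0 < m -> #|Aset m p| = m`!.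
Proof.
move=> m0; rewrite card_fixset.
- by rewrite count_lt; congr (_`!); lia.
- by move=> x hx hxm /=; case: (ltnP x p); lia.
- by move=> x y hx hy hx' hy' /=; case: (ltnP x p); case: (ltnP y p); lia.
Qed.

Lemma card_Bset m j : 0 < m -> j < m -> #|Bset m j| = m`!.
Proof.
move=> m0 hj; rewrite card_fixset.
- by rewrite count_ne; [congr (_`!); lia | lia | lia].
- by move=> x hx /andP [hxm hxj] /=; case: (ltnP x j); lia.
- move=> x y hx hy /andP [hx1 hx2] /andP [hy1 hy2] /=.
  by case: (ltnP x j); case: (ltnP y j); lia.
Qed.

Lemma card_Lset m : 0 < m -> #|Lset m| = m`!.
Proof.
move=> m0; rewrite card_fixset.
- by rewrite count_ge; [congr (_`!); lia | lia].
- by move=> x hx hxm /=; lia.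
- by move=> x y hx hy hx' hy' /=; lia.
Qed.

Lemma card_Iset m : 0 < m -> #|Iset m| = m.-1`!.
Proof.
move=> m0; rewrite card_fixset.
- by rewrite (eq_count (a2 := fun x => x < m.+1)) // count_lt; congr (_`!); lia.
- by move=> x hx hxm /=; case: (ltnP x (m - 1)); lia.
- by move=> x y hx hy hx' hy' /=; case: (ltnP x (m - 1)); case: (ltnP y (m - 1)); lia.
Qed.

Lemma card_AU m : 0 < m -> #|AU m| = m.+1 * m`!.
Proof.
move=> m0; rewrite /AU (@card_has_union _ (Aset m) m.+1 m`!) //.
- by move=> p _; rewrite card_Aset.
- move=> p q s hpq hq /fixsetP HA /fixsetP HB.
  have hp : p < m.*2 by lia.
  have hpm : p < m by lia.
  have := HA (Ordinal hp) hpm; have := HB (Ordinal hp) hpm; rewrite /= ltnn hpq; lia.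
Qed.

Lemma card_BU m : 0 < m -> #|BU m| = m * m`!.
Proof.
move=> m0; rewrite /BU (@card_has_union _ (Bset m) m m`!) //.
- by move=> p hp; rewrite card_Bset.
- move=> p q s hpq hq /fixsetP HA /fixsetP HB.
  have h1 : q < m.*2 by lia.
  have h2 : q - 1 < m.*2 by lia.
  have E1 := HA (Ordinal h1) ltac:(rewrite /=; apply/andP; split; lia).
  have E2 := HB (Ordinal h2) ltac:(rewrite /=; apply/andP; split; lia).
  move: E1 E2; rewrite /= ltnNge (ltnW hpq) /= (_ : q - 1 < q); last by lia.
  move=> E1 E2; have := @perm_val_inj _ s (Ordinal h1) (Ordinal h2).
  rewrite E1 E2 /=; lia.
Qed.

Lemma even_case m : 0 < m -> NE m.*2 (uphalf m.*2) = 2 * m.+1`! - m.-1`! - 1.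
Proof.
move=> m0; rewrite NE_has; last by lia.
rewrite uphalf_double (eq_card (B := AU m :|: BU m :|: Lset m)); last first.
  by move=> s; rewrite [in LHS]inE even_char.
rewrite cardsU ABL_int // cards1 cardsU AB_int // card_AU // card_BU // card_Lset //.
rewrite card_Iset // factS.
have hG : m.-1`! <= m`! by case: m m0 => // m' _; rewrite factS leq_pmull.
have hG0 := fact_gt0 m.-1.
rewrite mulSn; move: (m * m`!) (m`!) (m.-1`!) hG hG0 => P F G hG hG0; lia.
Qed.

Unset Implicit Arguments.

Theorem theorem2 (n m : nat) : (1 <= n)%N ->
  (n = m.*2.+1 -> NE n (uphalf n) = m`!) /\
  (n = m.*2 -> NE n (uphalf n) = (2 * m.+1`! - m.-1`! - 1)%N).
Proof.
move=> n1; split => E; subst n; first exact: odd_case.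
by apply: even_case; move: n1; case: m => //.
Qed.
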